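(* For every odometer $(X,T)$ there exists a metric $\rho$ on $X$ compatible with its topology such that $T$ has the (LRS) property with respect to $\rho$.
   Context: A dynamical system is $(X,T)$ with $X$ a compact metric space and $T\colon X\to X$ continuous. A point $x$ is regularly recurrent if for every open $U\ni x$ there is $n\geq1$ with $T^{in}(x)\in U$ for all $i\geq0$. $(X,T)$ is an odometer if it is equicontinuous (for every $\varepsilon>0$ there is $\delta>0$ with $d(x,y)<\delta\Rightarrow d(T^nx,T^ny)<\varepsilon$ for all $n\geq0$) and some regularly recurrent point has dense orbit. $T$ has the (LRS) property with respect to $\rho$ if for every $x\in X$ there is $\varepsilon_x>0$ such that $0<\rho(x,y)<\varepsilon_x$ implies $\rho(T(x),T(y))<\rho(x,y)$. *)

(* Defs.v *)
From HB Require Import structures.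
From mathcomp Require Import all_boot all_order all_algebra.
From mathcomp Require Import all_classical all_reals all_analysis.
Set Implicit Arguments. Unset Strict Implicit. Unset Printing Implicit Defensive.
Import Order.TTheory GRing.Theory Num.Theory.
Local Open Scope classical_set_scope.
Local Open Scope ring_scope.

(* A compact metric space is modelled as a Hausdorff (hence metric)
   pseudoMetricType X whose carrier is compact; its metric d is encoded by
   the balls: d(x,y) < e  <->  ball x e y. *)

Definition equicontinuous_sys {R : realType} {X : pseudoMetricType R}
  (T : X -> X) : Prop :=
  forall eps : R, 0 < eps -> exists2 delta : R, 0 < delta &
    forall x y : X, ball x delta y ->
      forall n : nat, ball (iter n T x) eps (iter n T y).

Definition regularly_recurrent {X : topologicalType} (T : X -> X) (x : X) :
  Prop :=
  forall U : set X, open U -> U x ->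
    exists2 n : nat, (1 <= n)%N & forall i : nat, U (iter (i * n) T x).

Definition dense_orbit {X : topologicalType} (T : X -> X) (x : X) : Prop :=
  closure (range (fun n : nat => iter n T x)) = [set: X].

Definition odometer {R : realType} {X : pseudoMetricType R} (T : X -> X) :
  Prop :=
  equicontinuous_sys T /\
  exists x : X, regularly_recurrent T x /\ dense_orbit T x.

Definition is_metric {R : realType} {X : Type} (rho : X -> X -> R) : Prop :=
  [/\ forall x y, 0 <= rho x y,
      forall x y, rho x y = 0 <-> x = y,
      forall x y, rho x y = rho y x &
      forall x y z, rho x z <= rho x y + rho y z].

Definition compatible_metric {R : realType} {X : topologicalType}
  (rho : X -> X -> R) : Prop :=
  forall A : set X, open A <->
    (forall x, A x -> exists2 e : R, 0 < e & forall y, rho x y < e -> A y).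

Definition LRS {R : realType} {X : Type} (rho : X -> X -> R) (T : X -> X) :
  Prop :=
  forall x : X, exists2 ex : R, 0 < ex &
    forall y : X, 0 < rho x y < ex -> rho (T x) (T y) < rho x y.

(* Main.v *)
Require Import Defs.
From HB Require Import structures.
From mathcomp Require Import all_boot all_order all_algebra.
From mathcomp Require Import all_classical all_reals all_analysis.
From mathcomp Require Import zify ring lra.
Import Order.TTheory GRing.Theory Num.Theory.
Local Open Scope classical_set_scope.
Local Open Scope ring_scope.
Set Implicit Arguments. Unset Strict Implicit. Unset Printing Implicit Defensive.
Lemma hn_step (r s : nat) : (3 <= r)%N -> (s < r.-1)%N ->
  (((r.-1 == r.-1) || (s == r.-1)) + (r.-1 + s == r.*2 - 3))%N =
  ((((0 == r.-1) || (s.+1 == r.-1)) + (0 + s.+1 == r.*2 - 3)).+1)%N.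
Proof.
move=> r3 hs.
rewrite eqxx /= add0n.
have e1 : (0 == r.-1) = false by apply/eqP; lia.
have e2 : (s.+1 == r.*2 - 3)%N = false by apply/eqP; lia.
rewrite e1 e2 /= addn0.
have [->|nes] := eqVneq s r.-2.
  have e3 : (r.-2.+1 == r.-1) = true by apply/eqP; lia.
  have e4 : (r.-1 + r.-2 == r.*2 - 3)%N = true by apply/eqP; lia.
  by rewrite e3 e4.
have e3 : (s.+1 == r.-1) = false by apply/eqP; lia.
have e4 : (r.-1 + s == r.*2 - 3)%N = false by apply/eqP; lia.
by rewrite e3 e4.
Qed.

Section Metric.
Variables (R : realType) (X : pseudoMetricType R).
Hypothesis hX : hausdorff_space X.
Variable T : X -> X.
Variables (m : nat -> nat) (c : nat -> X -> nat).
Hypothesis m0 : m 0 = 1%N.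
Hypothesis mpos : forall j, (0 < m j)%N.
Hypothesis c_lt : forall j x, (c j x < m j)%N.
Hypothesis c_T : forall j x, c j (T x) = ((c j x).+1 %% m j)%N.
Hypothesis m_dvd : forall j, (m j %| m j.+1)%N.
Hypothesis c_nest : forall j x, (c j.+1 x %% m j)%N = c j x.
Hypothesis c_open : forall j x, exists2 e : R, 0 < e &
  forall y, ball x e y -> c j y = c j x.
Hypothesis c_mesh : forall x (e : R), 0 < e -> exists j,
  forall y, c j y = c j x -> ball x e y.
Hypothesis m_ratio : (exists J, forall j, (J <= j)%N -> m j = m J) \/
  (forall k, (3 * m k <= m k.+1)%N).

Lemma eq_of_balls (x y : X) : (forall e : R, 0 < e -> ball x e y) -> x = y.
Proof. move=> H; apply: (close_eq hX); rewrite ball_close => e; exact: H. Qed.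

Lemma dvd_le j j' : (j <= j')%N -> (m j %| m j')%N.
Proof.
elim: j' => [|j' IH]; first by rewrite leqn0 => /eqP ->.
rewrite leq_eqVlt => /orP [/eqP -> //| ]; rewrite ltnS => /IH H.
exact: dvdn_trans H (m_dvd j').
Qed.

Lemma nest_le j j' (x : X) : (j <= j')%N -> (c j' x %% m j)%N = c j x.
Proof.
elim: j' => [|j' IH]; first by rewrite leqn0 => /eqP ->; rewrite modn_small.
rewrite leq_eqVlt => /orP [/eqP -> //|]; first by rewrite modn_small.
rewrite ltnS => H; rewrite -(IH H) -(c_nest j' x).
by rewrite (modn_dvdm _ (dvd_le H)).
Qed.

Lemma agree_le j j' (x y : X) : (j <= j')%N -> c j' x = c j' y -> c j x = c j y.
Proof. by move=> H E; rewrite -(nest_le x H) -(nest_le y H) E. Qed.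

Lemma c0 (x : X) : c 0 x = 0%N.
Proof. by have := c_lt 0 x; rewrite m0 ltnS leqn0 => /eqP. Qed.

Lemma all_agree (x y : X) : (forall j, c j x = c j y) -> x = y.
Proof.
move=> H; apply: eq_of_balls => e e0; have [j Hj] := c_mesh x e0.
exact/Hj.
Qed.

Definition lvl (x y : X) : nat :=
  match pselect (exists j, c j.+1 x != c j.+1 y) with
  | left H => @ex_minn (fun j => c j.+1 x != c j.+1 y) H
  | right _ => 0%N end.

Lemma lvlP (x y : X) : x <> y ->
  (forall i, (i <= lvl x y)%N -> c i x = c i y) /\ c (lvl x y).+1 x != c (lvl x y).+1 y.
Proof.
move=> nxy; rewrite /lvl; case: pselect => [H|nH]; last first.
  exfalso; apply: nxy; apply: all_agree => -[|j]; first by rewrite !c0.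
  by apply/eqP/negPn/negP => Hn; apply: nH; exists j.
case: ex_minnP => k Hk Hmin; split=> // -[|i] Hi; first by rewrite !c0.
apply/eqP/negPn/negP => Hn; have := Hmin _ Hn; rewrite leqNgt.
by move/negP; apply.
Qed.

Lemma lvl_agree (x y : X) i : x <> y -> (c i x = c i y <-> (i <= lvl x y)%N).
Proof.
move=> nxy; have [H1 H2] := lvlP nxy; split; last exact: H1.
move=> E; rewrite leqNgt; apply/negP => Hlt.
by move/eqP: H2; apply; apply: agree_le Hlt E.
Qed.

Lemma lvl_uniq (x y : X) k : x <> y -> c k x = c k y -> c k.+1 x != c k.+1 y ->
  lvl x y = k.
Proof.
move=> nxy E N; apply/eqP; rewrite eqn_leq; apply/andP; split.
  rewrite leqNgt; apply/negP => H; move/eqP: N; apply.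
  by apply/(lvl_agree _ nxy).
exact/(lvl_agree _ nxy).
Qed.

Lemma lvlC (x y : X) : x <> y -> lvl x y = lvl y x.
Proof.
move=> nxy; have nyx : y <> x by move=> E; apply: nxy.
have [H1 H2] := lvlP nyx; apply: lvl_uniq => //; first by rewrite H1.
by rewrite eq_sym.
Qed.


Definition wt (k : nat) : R := (k.+1)%:R^-1.

Lemma wt_gt0 k : 0 < wt k.
Proof. by rewrite /wt invr_gt0 ltr0n. Qed.

Lemma wt_le a b : (a <= b)%N -> wt b <= wt a.
Proof.
by move=> H; rewrite /wt lef_pV2 ?posrE ?ltr0n // ler_nat ltnS.
Qed.

Lemma wt_lt a b : (a < b)%N -> wt b < wt a.
Proof.
by move=> H; rewrite /wt ltf_pV2 ?posrE ?ltr0n // ltr_nat ltnS.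
Qed.

Definition hn k (x y : X) : nat :=
  let p := m k in let r := (m k.+1 %/ p)%N in
  let s := (c k.+1 x %/ p)%N in let s' := (c k.+1 y %/ p)%N in
  (((s == r.-1) || (s' == r.-1)) + (s + s' == r.*2 - 3))%N.

Definition un k (x : X) : nat := ((m k).-1 - c k x)%N.

Definition f k (x y : X) : R :=
  ((hn k x y)%:R + (un k x)%:R / (m k)%:R) / 3.

Definition rho (x y : X) : R :=
  if pselect (x = y) then 0 else wt (lvl x y) * (1 + f (lvl x y) x y).

Lemma hn_le k x y : (hn k x y <= 2)%N.
Proof. by rewrite /hn; case: (_ || _); case: (_ == _). Qed.

Lemma un_lt k x : (un k x < m k)%N.
Proof. by have := mpos k; rewrite /un; lia. Qed.

Lemma f_ge0 k x y : 0 <= f k x y.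
Proof. by rewrite /f; apply: divr_ge0 => //; apply: addr_ge0 => //; apply: divr_ge0. Qed.

Lemma f_lt1 k x y : f k x y < 1.
Proof.
rewrite /f ltr_pdivrMr // mul1r.
have h1 : (hn k x y)%:R <= 2 :> R by rewrite (ler_nat R _ 2) hn_le.
have h2 : (un k x)%:R / (m k)%:R < 1 :> R.
  by rewrite ltr_pdivrMr ?ltr0n // mul1r ltr_nat un_lt.
lra.
Qed.

Lemma rho_bounds x y : x <> y ->
  wt (lvl x y) <= rho x y /\ rho x y < 2 * wt (lvl x y).
Proof.
move=> nxy; rewrite /rho; case: pselect => [//|nE] /=.
have h1 := f_ge0 (lvl x y) x y; have h2 := f_lt1 (lvl x y) x y.
have h3 := wt_gt0 (lvl x y).
have h4 : 0 <= wt (lvl x y) * f (lvl x y) x y by apply: mulr_ge0 => //; exact: ltW.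
have h5 : wt (lvl x y) * f (lvl x y) x y < wt (lvl x y) by rewrite gtr_pMr.
rewrite mulrDr mulr1; split; lra.
Qed.

Lemma rho_ge0 x y : 0 <= rho x y.
Proof.
rewrite /rho; case: pselect => // nxy.
by apply: mulr_ge0; [exact/ltW/wt_gt0|apply: addr_ge0 => //; exact: f_ge0].
Qed.

Lemma rho_eq0 x y : rho x y = 0 <-> x = y.
Proof.
split; last by move=> ->; rewrite /rho; case: pselect.
move=> H; apply: contrapT => nxy; have [h1 _] := rho_bounds nxy.
by have := wt_gt0 (lvl x y); lra.
Qed.

Lemma f_congr k x y x' y' : c k x = c k x' -> c k.+1 x = c k.+1 x' ->
  c k.+1 y = c k.+1 y' -> f k x y = f k x' y'.
Proof. by move=> e1 e2 e3; rewrite /f /hn /un e1 e2 e3. Qed.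

Lemma f_sym k x y : c k x = c k y -> f k x y = f k y x.
Proof.
move=> e; rewrite /f /hn /un e; congr (((_ + _)%:R + _) / 3).
  by rewrite orbC.
by rewrite addnC.
Qed.

Lemma rho_val x y : x <> y -> rho x y = wt (lvl x y) * (1 + f (lvl x y) x y).
Proof. by rewrite /rho; case: pselect. Qed.

Lemma rhoC x y : rho x y = rho y x.
Proof.
have [->|nxy] := pselect (x = y); first by [].
have nyx : y <> x by move=> E; apply: nxy.
rewrite !rho_val // (lvlC nxy); congr (_ * (1 + _)); apply: f_sym.
by have [H _] := lvlP nyx; exact/esym/H.
Qed.



Lemma rho_triangle x y z : rho x z <= rho x y + rho y z.
Proof.
have rr u : rho u u = 0 by apply/rho_eq0.
have [->|nxy] := pselect (x = y); first by rewrite rr add0r.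
have [->|nyz] := pselect (y = z); first by rewrite rr addr0.
have [->|nxz] := pselect (x = z).
  by rewrite rr; apply: addr_ge0; exact: rho_ge0.
set a := lvl x y; set b := lvl y z.
have [Axy Dxy] := lvlP nxy; have [Ayz Dyz] := lvlP nyz.
have hyz := rho_ge0 y z; have hxy := rho_ge0 x y.
have [ab|ba|ab] := ltngtP a b.
- have E : lvl x z = a.
    apply: lvl_uniq => //; first by rewrite Axy // Ayz // ltnW.
    by rewrite -(Ayz a.+1) //.
  have -> : rho x z = rho x y.
    rewrite !rho_val // E; congr (_ * (1 + _)); apply: f_congr => //.
    by rewrite (Ayz a.+1).
  lra.
- have E : lvl x z = b.
    apply: lvl_uniq => //; first by rewrite Axy // ?Ayz // ltnW.
    by rewrite (Axy b.+1) //.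
  have -> : rho x z = rho y z.
    rewrite !rho_val // E; congr (_ * (1 + _)); apply: f_congr => //.
      by rewrite Axy // ltnW.
    by rewrite (Axy b.+1).
  lra.
- have Hle : (a <= lvl x z)%N.
    by apply/(lvl_agree _ nxz); rewrite Axy // Ayz ?ab.
  have [_ h1] := rho_bounds nxz; have [h2 _] := rho_bounds nxy.
  have [h3 _] := rho_bounds nyz.
  have := wt_le Hle; rewrite -/a -/b ab in h2 * => h4.
  lra.
Qed.


Lemma exists_wt (e : R) : 0 < e -> exists j, 2 * wt j < e.
Proof.
move=> e0; have h : 0 <= 2 / e by apply: divr_ge0 => //; exact: ltW.
have := archi_boundP h; set k := Num.Def.archi_bound _ => hk.
exists k; rewrite /wt.
have kp : (0 : R) < k.+1%:R by rewrite ltr0n.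
rewrite -ltr_pdivlMr // ?invr_gt0 // invrK.
rewrite ltr_pdivrMr // in hk.
have : (k%:R : R) < k.+1%:R by rewrite ltr_nat.
by rewrite mulrC; nra.
Qed.

Lemma compat : compatible_metric rho.
Proof.
move=> A; split.
- move=> oA x Ax; have : nbhs x A by rewrite openE in oA; exact: oA.
  move/nbhs_ballP => [e /= e0 sub]; have [j Hj] := c_mesh x e0.
  exists (wt j); first exact: wt_gt0.
  move=> y Hy; have [<-//|nxy] := pselect (x = y).
  have [h1 _] := rho_bounds nxy.
  have hj : (j <= lvl x y)%N.
    rewrite leqNgt; apply/negP => /wt_lt; lra.
  by apply: sub; apply: Hj; apply/esym/(lvl_agree _ nxy).
- move=> H; rewrite openE => x Ax; have [e e0 He] := H x Ax.
  have [j Hj] := exists_wt e0; have [e' e'0 He'] := c_open j x.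
  rewrite /interior; apply/nbhs_ballP; exists e' => // y Bxy; apply: He.
  have [<-|nxy] := pselect (x = y); first by rewrite (proj2 (rho_eq0 x x)).
  have [_ h2] := rho_bounds nxy.
  have hj : (j <= lvl x y)%N by apply/(lvl_agree _ nxy); rewrite (He' y Bxy).
  have := wt_le hj; lra.
Qed.

Lemma is_met : is_metric rho.
Proof.
split; [exact: rho_ge0|exact: rho_eq0|exact: rhoC|].
move=> x y z; exact: rho_triangle.
Qed.

Lemma succ_inj_mod (a b p : nat) : (a < p)%N -> (b < p)%N ->
  (a.+1 %% p = b.+1 %% p)%N -> a = b.
Proof.
move=> ha hb /eqP; rewrite -[a.+1]addn1 -[b.+1]addn1 eqn_modDr !modn_small // => /eqP //.
Qed.

Lemma c_shift i x y : c i (T x) = c i (T y) <-> c i x = c i y.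
Proof.
rewrite !c_T; split; last by move=> ->.
by apply: succ_inj_mod; apply: c_lt.
Qed.

Lemma lvl_T x y : x <> y -> T x <> T y /\ lvl (T x) (T y) = lvl x y.
Proof.
move=> nxy; have [H1 H2] := lvlP nxy.
have nT : T x <> T y.
  by move=> E; move/eqP: H2; apply; apply/(c_shift _ x y); rewrite E.
split=> //; apply: lvl_uniq => //; first by apply/c_shift; apply: H1.
by apply/negP => /eqP /c_shift /eqP; apply/negP.
Qed.

Lemma decomp k z : c k.+1 z = (c k.+1 z %/ m k * m k + c k z)%N.
Proof. by rewrite {1}(divn_eq (c k.+1 z) (m k)) c_nest. Qed.

Lemma r_def k : m k.+1 = (m k.+1 %/ m k * m k)%N.
Proof. by rewrite divnK. Qed.

Lemma s_lt k z : (c k.+1 z %/ m k < m k.+1 %/ m k)%N.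
Proof. by rewrite ltn_divLR // -r_def. Qed.

Lemma caseA k z : ((c k z).+1 < m k)%N ->
  c k (T z) = (c k z).+1 /\ (c k.+1 (T z) %/ m k = c k.+1 z %/ m k)%N.
Proof.
move=> h; rewrite !c_T modn_small //; split=> //.
have hs := s_lt k z; have hd := decomp k z; have hr := r_def k.
set s := (c k.+1 z %/ m k)%N in hs hd *; set r := (m k.+1 %/ m k)%N in hs hr.
set u := c k z in h hd; set p := m k in h hd hr *.
rewrite hd modn_small; last by rewrite hr; nia.
by rewrite -addnS divnMDl ?divn_small //; [rewrite addn0|exact: mpos].
Qed.

Lemma predm_mod j k : (j <= k)%N -> ((m k).-1 %% m j)%N = (m j).-1.
Proof.
move=> h; have /dvdnP [t ht] := dvd_le h.
have hk := mpos k; have hj := mpos j.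
have tp : (0 < t)%N by move: hk; rewrite ht muln_gt0 => /andP [].
have -> : (m k).-1 = ((t.-1) * m j + (m j).-1)%N by rewrite ht; nia.
by rewrite modnMDl modn_small // prednK.
Qed.

Lemma f_decA k x y : ((c k x).+1 < m k)%N -> c k x = c k y ->
  f k (T x) (T y) < f k x y.
Proof.
move=> h e; have [ax bx] := caseA h.
have h' : ((c k y).+1 < m k)%N by rewrite -e.
have [ay b_y] := caseA h'.
rewrite /f /hn bx b_y ltr_pM2r ?invr_gt0 // ltrD2l ltr_pM2r ?invr_gt0 ?ltr0n //.
by rewrite ltr_nat /un ax; lia.
Qed.

Lemma f_decB k x y : (3 * m k <= m k.+1)%N ->
  c k x = (m k).-1 -> c k.+1 x = (m k.+1).-1 -> c k x = c k y ->
  c k.+1 x != c k.+1 y -> f k (T x) (T y) < f k x y.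
Proof.
move=> h3 hx hx1 e ne.
have hp := mpos k; have hr := r_def k; have hdy := decomp k y; have hsy := s_lt k y.
set p := m k in h3 hx hp hr hdy *; set r := (m k.+1 %/ p)%N in hr hsy *.
rewrite -e hx in hdy; set s := (c k.+1 y %/ p)%N in hdy hsy.
have r3 : (3 <= r)%N by rewrite hr in h3; nia.
have sx : (c k.+1 x %/ p = r.-1)%N.
  rewrite hx1 hr; apply/eqP; rewrite eqn_leq; apply/andP; split.
    by rewrite -ltnS prednK ?ltn_divLR //; nia.
  by rewrite leq_divRL //; nia.
have ns : s != r.-1 by apply: contraNneq ne => es; rewrite hdy es hx1 hr; nia.
have tx1 : c k.+1 (T x) = 0%N by rewrite c_T hx1 prednK ?modnn // hr; nia.
have tx : c k (T x) = 0%N by rewrite c_T hx prednK ?modnn.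
have ty1 : c k.+1 (T y) = (s.+1 * p)%N.
  by rewrite c_T hdy hr modn_small; nia.
have hs : (s < r.-1)%N by move: ns; rewrite neq_ltn => /orP [//|]; lia.
rewrite /f /hn tx1 ty1 sx mulnK // div0n -/p -/r.
rewrite ltr_pM2r ?invr_gt0 //.
have -> : un k x = 0%N by rewrite /un hx subnn.
have -> : un k (T x) = p.-1 by rewrite /un tx subn0.
rewrite mul0r addr0.
have hlt : (p.-1%:R / p%:R : R) < 1.
  by rewrite ltr_pdivrMr ?ltr0n // mul1r ltr_nat prednK.
rewrite hn_step //; rewrite -natr1; lra.
Qed.

Lemma lrs : LRS rho T.
Proof.
move=> x; case: m_ratio => [[J HJ]|Hr].
  exists (wt J); first exact: wt_gt0.
  move=> y /andP [h0 h1]; exfalso.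
  have nxy : x <> y by move=> E; move: h0; rewrite E (proj2 (rho_eq0 y y)) // ltxx.
  have [hl _] := rho_bounds nxy.
  have hj : (J <= lvl x y)%N by rewrite leqNgt; apply/negP => /wt_lt; lra.
  suff E : x = y by apply: nxy.
  apply: all_agree => j.
  have [jJ|Jj] := leqP j J; first by apply/(lvl_agree _ nxy); exact: leq_trans hj.
  have hJ : c J x = c J y by apply/(lvl_agree _ nxy).
  have hJj := HJ j (ltnW Jj).
  have cx : c j x = c J x by rewrite -(nest_le x (ltnW Jj)) modn_small // -hJj.
  have cy : c j y = c J y by rewrite -(nest_le y (ltnW Jj)) modn_small // -hJj.
  by rewrite cx cy.
have [[J HJ]|nH] := pselect (exists J, c J x != (m J).-1).
  exists (wt J); first exact: wt_gt0.
  move=> y /andP [h0 h1].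
  have nxy : x <> y by move=> E; move: h0; rewrite E (proj2 (rho_eq0 y y)) // ltxx.
  have [hl _] := rho_bounds nxy.
  have hj : (J <= lvl x y)%N by rewrite leqNgt; apply/negP => /wt_lt; lra.
  have [nT lT] := lvl_T nxy; have [H1 H2] := lvlP nxy.
  rewrite !rho_val // lT ltr_pM2l ?wt_gt0 // ltrD2l; apply: f_decA; last exact: H1.
  have := c_lt (lvl x y) x; rewrite leq_eqVlt => /orP [/eqP E|//].
  exfalso; move/eqP: HJ; apply; rewrite -(nest_le x hj).
  have -> : c (lvl x y) x = (m (lvl x y)).-1 by rewrite -E.
  exact: predm_mod.
exists 1 => // y /andP [h0 h1].
have nxy : x <> y by move=> E; move: h0; rewrite E (proj2 (rho_eq0 y y)) // ltxx.
have [nT lT] := lvl_T nxy; have [H1 H2] := lvlP nxy.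
have allx j : c j x = (m j).-1 by apply/eqP/negPn/negP => Hn; apply: nH; exists j.
rewrite !rho_val // lT ltr_pM2l ?wt_gt0 // ltrD2l; apply: f_decB => //; exact: H1.
Qed.

Lemma metric_main : exists rho : X -> X -> R,
  [/\ is_metric rho, compatible_metric rho & LRS rho T].
Proof. exists rho; split; [exact: is_met|exact: compat|exact: lrs]. Qed.

End Metric.

Lemma L_arith (n r s a e i j p K N : nat) : (0 < n)%N -> (0 < N)%N ->
  K = (r + i * n + e)%N -> (e + r == a + s %[mod n])%N ->
  let mm := (a + p * n + K * n * N - (r + i * n))%N in
  (mm + (r + i * n) = a + p * n + K * n * N)%N /\
  exists i', (mm + (s + j * n) = e + i' * n)%N.
Proof.
move=> n0 N0 hK hmod mm.
have hKn : (K <= K * n * N)%N.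
  by rewrite -mulnA leq_pmulr // muln_gt0 n0 N0.
have h1 : (mm + (r + i * n) = a + p * n + K * n * N)%N.
  by rewrite /mm subnK //; lia.
split=> //.
set E' := (mm + (s + j * n))%N.
have hE : (e <= E')%N by rewrite /E' /mm; lia.
have hmE : (E' + r == e + r %[mod n])%N.
  rewrite (eqP hmod).
  have : (E' + r + i * n = (a + s) + (p + K * N + j) * n)%N.
    by rewrite /E' !mulnDl (mulnAC K N n); lia.
  move=> h2; rewrite -(modnMDl i (E' + r)) addnC h2.
  by rewrite addnC modnMDl.
rewrite eqn_modDr eqn_mod_dvd // in hmE.
exists ((E' - e) %/ n)%N; rewrite divnK //; lia.
Qed.

Section Construct.
Variables (R : realType) (X : pseudoMetricType R) (T : X -> X) (x0 : X).
Hypothesis E : equicontinuous_sys T.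
Hypothesis rr : regularly_recurrent T x0.
Hypothesis dn : dense_orbit T x0.

Local Notation o a := (iter a T x0).

Definition A (n t : nat) : set X := closure (range (fun i => o (t + i * n)%N)).

Lemma closure_ballP (S : set X) y :
  closure S y <-> forall e : R, 0 < e -> exists z, S z /\ ball y e z.
Proof.
split.
  move=> H e e0; have [z [Sz Bz]] := H _ (nbhsx_ballx y e e0); by exists z.
move=> H B /nbhs_ballP [e /= e0 sub]; have [z [Sz Bz]] := H e e0.
by exists z; split => //; exact: sub.
Qed.

Lemma rec_mult (e : R) : 0 < e ->
  exists2 N, (1 <= N)%N & forall i, ball x0 e (o (i * N)%N).
Proof.
move=> e0; have hU : open (ball x0 e)° by exact: open_interior.
have Ux : (ball x0 e)° x0 by exact: nbhsx_ballx.
have [N N1 HN] := rr hU Ux; exists N => // i.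
exact: interior_subset (HN i).
Qed.

Lemma ball3 (x y z w : X) (e : R) : ball x (e / 3) y -> ball y (e / 3) z ->
  ball z (e / 3) w -> ball x e w.
Proof.
move=> h1 h2 h3; have := ball_triangle (ball_triangle h1 h2) h3.
by have -> : e / 3 + e / 3 + e / 3 = e by field.
Qed.

Lemma keyL n r s a e y z : (0 < n)%N -> A n r y -> A n s y -> A n a z ->
  (e + r == a + s %[mod n])%N -> A n e z.
Proof.
move=> n0 Ar As Aa hmod; apply/closure_ballP => eta eta0.
have eta3 : 0 < eta / 3 by apply: divr_gt0.
have [d d0 Hd] := E eta3.
have d2 : 0 < d / 2 by apply: divr_gt0.
have [_ [[p _ <-] Bz]] := (iffLR (closure_ballP _ _) Aa) _ eta3.
have [_ [[i _ <-] By1]] := (iffLR (closure_ballP _ _) Ar) _ d2.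
have [_ [[j _ <-] By2]] := (iffLR (closure_ballP _ _) As) _ d2.
have B12 : ball (o (r + i * n)%N) d (o (s + j * n)%N).
  have := ball_triangle (ball_sym By1) By2.
  by have -> : d / 2 + d / 2 = d by field.
have [N N1 HN] := rec_mult d0.
set K := (r + i * n + e)%N.
have [h1 [i' h2]] := L_arith j p n0 N1 (erefl K) hmod.
set mm := (a + p * n + K * n * N - (r + i * n))%N in h1 h2.
exists (o (e + i' * n)%N); split; first by exists i'.
have H1 := Hd _ _ (HN (K * n)%N) (a + p * n)%N; rewrite -iterD in H1.
have H2 := Hd _ _ B12 mm; rewrite -!iterD h1 h2 in H2.
exact: ball3 Bz H1 H2.
Qed.


Lemma A0 n : A n 0 x0.
Proof. by apply: subset_closure; exists 0%N => //; rewrite mul0n. Qed.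

Lemma A_mod n a e z : (0 < n)%N -> A n a z -> (e == a %[mod n])%N -> A n e z.
Proof. by move=> n0 Aa h; apply: (keyL n0 (A0 n) (A0 n) Aa); rewrite !addn0. Qed.

Lemma A_shift n t y : A n t y -> A n t.+1 (T y).
Proof.
move=> At; apply/closure_ballP => e e0; have [d d0 Hd] := E e0.
have [_ [[i _ <-] B]] := (iffLR (closure_ballP _ _) At) _ d0.
exists (o (t.+1 + i * n)%N); split; first by exists i.
by have := Hd _ _ B 1%N; rewrite /= ?addSn.
Qed.

Lemma closure_finU (S : nat -> set X) k :
  closure [set p | exists2 t, (t < k)%N & S t p] `<=`
  [set p | exists2 t, (t < k)%N & closure (S t) p].
Proof.
elim: k => [|k IH] p.
  move/closure_ballP => /(_ 1 ltr01) [z [[t] //]].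
have -> : [set p | exists2 t, (t < k.+1)%N & S t p] =
    [set p | exists2 t, (t < k)%N & S t p] `|` S k.
  apply/seteqP; split => q.
    by move=> [t]; rewrite ltnS leq_eqVlt => /orP [/eqP -> Sk|tk St];
      [right|left; exists t].
  by move=> [[t tk St]|Sk]; [exists t => //; exact: ltnW|exists k].
rewrite closureU => -[/IH [t tk Ct]|Ck]; first by exists t => //; exact: ltnW.
by exists k.
Qed.

Lemma closed_finU (S : nat -> set X) k : (forall t, closed (S t)) ->
  closed [set p | exists2 t, (t < k)%N & S t p].
Proof.
move=> cS; elim: k => [|k IH].
  have -> : [set p | exists2 t, (t < 0)%N & S t p] = set0 by apply/seteqP; split => q // [].
  exact: closed0.
have -> : [set p | exists2 t, (t < k.+1)%N & S t p] =
    [set p | exists2 t, (t < k)%N & S t p] `|` S k.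
  apply/seteqP; split => q.
    by move=> [t]; rewrite ltnS leq_eqVlt => /orP [/eqP -> Sk|tk St];
      [right|left; exists t].
  by move=> [[t tk St]|Sk]; [exists t => //; exact: ltnW|exists k].
exact: closedU.
Qed.

Lemma cover n y : (0 < n)%N -> exists t, A n t y.
Proof.
move=> n0; have : closure (range (fun a => o a)) y by rewrite dn.
have sub : range (fun a => o a) `<=`
    [set p | exists2 t, (t < n)%N & range (fun i => o (t + i * n)%N) p].
  move=> _ [a _ <-]; exists (a %% n)%N; first exact: ltn_pmod.
  by exists (a %/ n)%N => //; rewrite addnC -divn_eq.
by move/(closureS sub)/closure_finU => [t _ Ct]; exists t.
Qed.

Definition qn n : nat :=
  match pselect (exists t, (0 < t)%N && `[< A n t x0 >]) with
  | left H => @ex_minn (fun t => (0 < t)%N && `[< A n t x0 >]) H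
  | right _ => 1%N end.

Lemma Ann n : (0 < n)%N -> A n n x0.
Proof. by move=> n0; apply: (A_mod n0 (A0 n)); rewrite modnn mod0n. Qed.

Lemma qnP n : (0 < n)%N -> [/\ (0 < qn n)%N, A n (qn n) x0 &
  forall t, (0 < t)%N -> A n t x0 -> (qn n <= t)%N].
Proof.
move=> n0; rewrite /qn; case: pselect => [H|nH]; last first.
  by exfalso; apply: nH; exists n; rewrite n0 /=; apply/asboolP; exact: Ann.
case: ex_minnP => q /andP [q0 /asboolP Aq] Hmin; split=> // t t0 At.
by apply: Hmin; rewrite t0 /=; apply/asboolP.
Qed.

Lemma A_subq n a z : (0 < n)%N -> A n (a + qn n) z -> A n a z.
Proof.
move=> n0 h; have [_ Aq _] := qnP n0.
by apply: (keyL n0 Aq (A0 n) h); rewrite addn0.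
Qed.

Lemma A_addq n a z : (0 < n)%N -> A n a z -> A n (a + qn n) z.
Proof.
move=> n0 h; have [_ Aq _] := qnP n0.
by apply: (keyL n0 (A0 n) Aq h); rewrite addn0.
Qed.

Lemma A_modq n a z : (0 < n)%N -> A n a z <-> A n (a %% qn n) z.
Proof.
move=> n0; rewrite {1}(divn_eq a (qn n)) addnC.
elim: (a %/ qn n)%N => [|b IH]; first by rewrite mul0n addn0.
rewrite mulSn addnCA; split => h.
  by apply/IH; apply: (A_subq n0); rewrite addnC.
by have := A_addq n0 (iffRL IH h); rewrite addnC.
Qed.

Lemma q_dvd n t : (0 < n)%N -> A n t x0 -> (qn n %| t)%N.
Proof.
move=> n0 At; have [q0 _ Hmin] := qnP n0.
move/(A_modq _ _ n0): At => At; rewrite /dvdn; apply/eqP.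
apply/eqP; rewrite eqn0Ngt; apply/negP => h.
by have := Hmin _ h At; rewrite leqNgt ltn_pmod.
Qed.

Lemma A_same n r s y : (0 < n)%N -> A n r y -> A n s y ->
  (r %% qn n = s %% qn n)%N.
Proof.
move=> n0 Ar As.
have he : (s + n.-1 * r + r = s + n * r)%N.
  by rewrite -addnA -mulSnr prednK.
have Ae : A n (s + n.-1 * r)%N x0.
  apply: (keyL n0 Ar As (A0 n)).
  by rewrite add0n he addnC mulnC modnMDl.
have hq := q_dvd n0 Ae; have hn := q_dvd n0 (Ann n0).
have hnr : (qn n %| n * r)%N by apply: dvdn_mulr.
have h1 : ((s + n.-1 * r + r) %% qn n = r %% qn n)%N.
  by rewrite -modnDml (eqP hq) add0n.
have h2 : ((s + n.-1 * r + r) %% qn n = s %% qn n)%N.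
  by rewrite he -modnDmr (eqP hnr) addn0.
by rewrite -h1 h2.
Qed.

Definition cn n (y : X) : nat := xget 0%N [set t | (t < qn n)%N /\ A n t y].

Lemma cnP n y : (0 < n)%N -> (cn n y < qn n)%N /\ A n (cn n y) y.
Proof.
move=> n0; apply: (@xgetPex _ 0%N [set t | (t < qn n)%N /\ A n t y]).
have [t At] := cover y n0.
have [q0 _ _] := qnP n0.
by exists (t %% qn n)%N; split; [exact: ltn_pmod|exact: (iffLR (A_modq _ _ n0) At)].
Qed.

Lemma cn_uniq n y t : (0 < n)%N -> A n t y -> cn n y = (t %% qn n)%N.
Proof.
move=> n0 At; have [c1 c2] := cnP y n0.
by rewrite -(A_same n0 c2 At) modn_small.
Qed.

Lemma cn_T n y : (0 < n)%N -> cn n (T y) = ((cn n y).+1 %% qn n)%N.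
Proof. by move=> n0; apply: cn_uniq => //; apply: A_shift; have [] := cnP y n0. Qed.

Lemma cn_open n y : (0 < n)%N -> exists2 e : R, 0 < e &
  forall y', ball y e y' -> cn n y' = cn n y.
Proof.
move=> n0; set t0 := cn n y.
set B := [set p | exists2 t, (t < qn n)%N & [set p | t <> t0 /\ A n t p] p].
have cB : closed B.
  apply: closed_finU => t; have [->|nt] := pselect (t = t0).
    have -> : [set p | t0 <> t0 /\ A n t0 p] = set0 by apply/seteqP; split => q // [].
    exact: closed0.
  have -> : [set p | t <> t0 /\ A n t p] = A n t.
    by apply/seteqP; split => q // [].
  exact: closed_closure.
have nB : (~` B) y.
  move=> [t tq [nt At]]; apply: nt; rewrite /t0 (cn_uniq n0 At) modn_small //.
have : nbhs y (~` B) by have := closed_openC cB; rewrite openE => /(_ y nB).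
move/nbhs_ballP => [e /= e0 sub]; exists e => // y' By'.
have [c1 c2] := cnP y' n0; apply/eqP/negPn/negP => /eqP ne.
by apply: (sub _ By'); exists (cn n y').
Qed.

Lemma A_sub n N t z : A (n * N) t z -> A n t z.
Proof.
apply: closureS => _ [i _ <-]; exists (i * N)%N => //.
by rewrite -mulnA [(N * n)%N]mulnC.
Qed.

Lemma cn_nest n N y : (0 < n)%N -> (0 < N)%N -> cn n y = (cn (n * N) y %% qn n)%N.
Proof.
move=> n0 N0; have nN : (0 < n * N)%N by rewrite muln_gt0 n0.
have [_ h] := cnP y nN; exact: cn_uniq n0 (A_sub h).
Qed.

Lemma q_nest n N : (0 < n)%N -> (0 < N)%N -> (qn n %| qn (n * N))%N.
Proof.
move=> n0 N0; have nN : (0 < n * N)%N by rewrite muln_gt0 n0.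
have [_ h _] := qnP nN; exact: q_dvd n0 (A_sub h).
Qed.

Lemma q1 : qn 1 = 1%N.
Proof.
have [q0 _ _] := qnP (ltn0Sn 0); have := q_dvd (ltn0Sn 0) (Ann (ltn0Sn 0)).
by rewrite dvdn1 => /eqP.
Qed.

Lemma mesh_lvl n (eps : R) y z : (0 < n)%N -> 0 < eps ->
  (forall i a, ball (o a) eps (o (a + i * n)%N)) -> cn n y = cn n z ->
  ball y (eps + eps + eps + eps) z.
Proof.
move=> n0 e0 H e; have [_ Ay] := cnP y n0; have [_ Az] := cnP z n0.
rewrite e in Ay; set t := cn n z in Ay Az.
have [_ [[i _ <-] B1]] := (iffLR (closure_ballP _ _) Ay) _ e0.
have [_ [[j _ <-] B2]] := (iffLR (closure_ballP _ _) Az) _ e0.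
have := ball_triangle B1 (ball_sym (H i t)).
move/ball_triangle => /(_ _ _ (H j t)) /ball_triangle; apply.
exact: ball_sym.
Qed.




Definition dlt (j : nat) : R := projT1 (cid2 (E (wt_gt0 R j))).

Lemma dltP j : 0 < dlt j /\ forall x y, ball x (dlt j) y ->
  forall n, ball (iter n T x) (wt R j) (iter n T y).
Proof. by rewrite /dlt; case: cid2. Qed.

Definition Nj (j : nat) : nat := projT1 (cid2 (rec_mult (proj1 (dltP j)))).

Lemma NjP j : (1 <= Nj j)%N /\ forall i, ball x0 (dlt j) (o (i * Nj j)%N).
Proof. by rewrite /Nj; case: cid2. Qed.

Definition nn (j : nat) : nat := (\prod_(i < j) Nj i)%N.

Lemma nn_pos j : (0 < nn j)%N.
Proof. by rewrite /nn prodn_gt0 // => i; have [] := NjP i. Qed.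

Lemma nnS j : nn j.+1 = (nn j * Nj j)%N.
Proof. by rewrite /nn big_ord_recr. Qed.

Definition mm j := qn (nn j).
Definition cc j := cn (nn j).

Lemma levels_ok :
  [/\ mm 0 = 1%N, forall j, (0 < mm j)%N, forall j x, (cc j x < mm j)%N &
      forall j x, cc j (T x) = ((cc j x).+1 %% mm j)%N] /\
      [/\ forall j, (mm j %| mm j.+1)%N,
          forall j x, (cc j.+1 x %% mm j)%N = cc j x,
          forall j x, exists2 e : R, 0 < e & forall y, ball x e y -> cc j y = cc j x &
          forall x (e : R), 0 < e -> exists j, forall y, cc j y = cc j x -> ball x e y].
Proof.
split; first split.
- by rewrite /mm /nn big_ord0 q1.
- by move=> j; have [] := qnP (nn_pos j).
- by move=> j x; have [] := cnP x (nn_pos j).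
- by move=> j x; exact: cn_T (nn_pos j).
split.
- move=> j; rewrite /mm nnS; apply: q_nest; first exact: nn_pos.
  by have [] := NjP j.
- move=> j x; rewrite /cc /mm nnS -cn_nest //; first exact: nn_pos.
  by have [] := NjP j.
- move=> j x; exact: cn_open (nn_pos j).
move=> x e e0; have e2 : 0 < e / 2 by apply: divr_gt0.
have [j Hj] := exists_wt e2; exists j.+1 => y Hy.
have H : forall i a, ball (o a) (wt R j) (o (a + i * nn j.+1)%N).
  move=> i a; have [_ Hd] := dltP j; have [_ HN] := NjP j.
  have := Hd _ _ (HN (i * nn j)%N) a; rewrite -iterD nnS mulnA //.
have := mesh_lvl (nn_pos j.+1) (wt_gt0 R j) H (esym Hy).
apply: le_ball; have := wt_gt0 R j; lra.
Qed.

End Construct.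

Section Extract.
Variables (R : realType) (X : pseudoMetricType R).
Hypothesis hX : hausdorff_space X.
Variable T : X -> X.
Variables (m : nat -> nat) (c : nat -> X -> nat).
Hypothesis m0 : m 0 = 1%N.
Hypothesis mpos : forall j, (0 < m j)%N.
Hypothesis c_lt : forall j x, (c j x < m j)%N.
Hypothesis c_T : forall j x, c j (T x) = ((c j x).+1 %% m j)%N.
Hypothesis m_dvd : forall j, (m j %| m j.+1)%N.
Hypothesis c_nest : forall j x, (c j.+1 x %% m j)%N = c j x.
Hypothesis c_open : forall j x, exists2 e : R, 0 < e &
  forall y, ball x e y -> c j y = c j x.
Hypothesis c_mesh : forall x (e : R), 0 < e -> exists j,
  forall y, c j y = c j x -> ball x e y.

Lemma m_mono j j' : (j <= j')%N -> (m j <= m j')%N.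
Proof. by move=> h; apply: dvdn_leq; [exact: mpos|exact: dvd_le]. Qed.

Fixpoint phi (Hub : forall b, exists j, (b < m j)%N) (k : nat) : nat :=
  if k is k'.+1 then @ex_minn (fun j => 3 * m (phi Hub k') < m j)%N (Hub _)
  else 0%N.

Section Phi.
Variable Hub : forall b, exists j, (b < m j)%N.

Lemma phi_ratio k : (3 * m (phi Hub k) < m (phi Hub k.+1))%N.
Proof. by rewrite /=; case: ex_minnP. Qed.

Lemma phi_lt k : (phi Hub k < phi Hub k.+1)%N.
Proof.
rewrite ltnNge; apply/negP => /m_mono h.
have := phi_ratio k; have := mpos (phi Hub k); lia.
Qed.

Lemma phi_mono k k' : (k <= k')%N -> (phi Hub k <= phi Hub k')%N.
Proof.
elim: k' => [|k' IH]; first by rewrite leqn0 => /eqP ->.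
rewrite leq_eqVlt => /orP [/eqP -> //|]; rewrite ltnS => /IH h.
exact: leq_trans h (ltnW (phi_lt k')).
Qed.

Lemma phi_ge k : (k <= phi Hub k)%N.
Proof. by elim: k => [//|k IH]; exact: leq_ltn_trans IH (phi_lt k). Qed.

End Phi.

Lemma extract_main : exists rho : X -> X -> R,
  [/\ is_metric rho, compatible_metric rho & LRS rho T].
Proof.
have [[B HB]|nB] := pselect (exists B, forall j, (m j <= B)%N).
  apply: (metric_main hX m0 mpos c_lt c_T m_dvd c_nest c_open c_mesh); left.
  suff : forall d J, (B - m J <= d)%N ->
      exists J', forall j, (J' <= j)%N -> m j = m J' by move=> H; exact: (H _ 0%N (leqnn _)).
  elim=> [|d IH] J hd.
    exists J => j hj; apply/eqP; rewrite eqn_leq (m_mono hj) andbT.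
    by have := HB j; lia.
  have [all|] := pselect (forall j, (J <= j)%N -> m j = m J); first by exists J.
  move/existsNP => [j /not_implyP [hj ne]].
  have hm := m_mono hj.
  by apply: (IH j); have := HB j; lia.
have Hub : forall b, exists j, (b < m j)%N.
  move=> b; apply: contrapT => nb; apply: nB; exists b => j.
  by rewrite leqNgt; apply/negP => h; apply: nb; exists j.
pose m' k := m (phi Hub k); pose c' k := c (phi Hub k).
apply: (@metric_main R X hX T m' c').
- by rewrite /m'.
- by move=> j; exact: mpos.
- by move=> j x; exact: c_lt.
- by move=> j x; exact: c_T.
- by move=> j; exact: (dvd_le m_dvd (ltnW (phi_lt Hub j))).
- by move=> j x; exact: (nest_le c_lt m_dvd c_nest x (ltnW (phi_lt Hub j))).
- by move=> j x; exact: c_open.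
- move=> x e e0; have [j Hj] := c_mesh x e0; exists j => y Hy.
  by apply: Hj; apply: (agree_le c_lt m_dvd c_nest (phi_ge Hub j)).
- by right => k; apply: ltnW; exact: phi_ratio.
Qed.

End Extract.

Theorem corollary3p3 (R : realType) (X : pseudoMetricType R)
  (hX : hausdorff_space X) (cX : compact [set: X])
  (T : X -> X) (cT : continuous T) (odo : odometer T) :
  exists rho : X -> X -> R,
    [/\ is_metric rho, compatible_metric rho & LRS rho T].
Proof.
case: odo => E [x0 [rr dn]].
have [[m0 mpos c_lt c_T] [m_dvd c_nest c_open c_mesh]] := levels_ok E rr dn.
exact: (extract_main hX m0 mpos c_lt c_T m_dvd c_nest c_open c_mesh).
Qed.
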